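(* Let $D\ge 2$ be an integer. For all sufficiently large $n$ the following holds. Let $1\le t\le n$, let $\Gamma\sim\Gamma(n,D)$ be the random block model with vertex set $W$, and let $\mathcal{B}$ be a (fixed) well-behaved multiset of $t$ subsets of $W$. Fix $1\le k\le N$ and any vertex $u\in W_k\setminus\bigcup\mathcal{B}$, and let $\mathcal{E}$ be the event that there exists $B\in\mathcal{B}$ such that $u\in N_\Gamma(B)$. Then \[\Pr(\mathcal{E})\ge \min\Big\{\frac14,\; t\,n^{D^{1-k}-1}(\log n)^2(\log\log n)^D\Big\}.\]
   Context: Random block model $\Gamma(n,D)$ (for integers $D\ge 2$, $n$; $\log$ is the natural logarithm; rounding to integers is ignored). Let $N$ be the smallest integer with $n^{D^{1-N}}\le 3^{D^2}$. For $1\le i,k\le N$ let \[p_{i,k}=\min\big\{n^{-D^{-1}+D^{-i}+D^{-k}}(\log n)^{2/D}(\log\log n)^3,\,1\big\},\qquad \Delta_i=n^{D^{1-i}}.\] The vertex set is $W=W_1\,\dot\cup\cdots\dot\cup\, W_N$ with pairwise disjoint blocks of sizes $|W_k|=100\cdot 3^D n^{1-D^{-k}}$. For each pair of distinct vertices $u\in W_i$, $v\in W_k$ (possibly $i=k$), $uv$ is an edge independently with probability $p_{i,k}$. Each block $W_k$ is partitioned into sub-blocks $W_{k,1}$ of size $\frac12|W_k|$ and $W_{k,2},\dots,W_{k,\log n}$, each of size at least $\frac{1}{2\log n}|W_k|$. Well-behaved: for $1\le t\le n$, a multiset $\mathcal{B}=\{B_i\}_{i=1}^t$ with each $B_i\subseteq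 W$ is well-behaved if (NB1) $|B_i|\le D$ for all $i$; (NB2) for all $1\le k\le N$ and all $u\in W_k$, $|\{i\in[t]: u\in B_i\}|\le \Delta_k$; (NB3) for each $1\le k\le N$ and $1\le j\le \log n$, $|\bigcup\mathcal{B}\cap W_{k,j}|\le\frac12|W_{k,j}|$. Here $\bigcup\mathcal{B}=\bigcup_i B_i$. $N_\Gamma(B)$ denotes the common neighbourhood of $B$ in $\Gamma$ (the set of vertices adjacent to every vertex of $B$), with $N_\Gamma(\emptyset)$ being all vertices. *)

(* Defs.v *)
From mathcomp Require Import all_boot all_order all_algebra.
From mathcomp Require Import reals exp.
Set Implicit Arguments. Unset Strict Implicit. Unset Printing Implicit Defensive.
Import Order.TTheory GRing.Theory Num.Theory.
Local Open Scope ring_scope.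

Section RandomBlockModel.
Variables (R : realType) (D n : nat).

Definition nR : R := n%:R.
Definition Dpow (x : R) : R := (D%:R : R) `^ x.

Definition pblk (i k : nat) : R :=
  Num.min (nR `^ (- (D%:R)^-1 + Dpow (- i%:R) + Dpow (- k%:R))
           * (ln nR) `^ (2 / D%:R) * (ln (ln nR)) ^+ 3) 1.

Definition Delta (i : nat) : R := nR `^ (Dpow (1 - i%:R)).

Definition blk_size (k : nat) : R := 100 * 3 ^+ D * nR `^ (1 - Dpow (- k%:R)).

Definition is_N (N : nat) : Prop :=
  nR `^ (Dpow (1 - N%:R)) <= 3 ^+ (D ^ 2)
  /\ forall z : int, nR `^ (Dpow (1 - z%:~R)) <= 3 ^+ (D ^ 2) -> (N%:Z <= z)%R.

Variables (V : finType) (blk : V -> nat).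

Definition Wblk (k : nat) : {set V} := [set v | blk v == k].

Definition pair_prob (e : {set V}) : R :=
  if [pick xy : V * V | (xy.1 != xy.2) && (e == [set xy.1; xy.2])] is Some xy
  then pblk (blk xy.1) (blk xy.2) else 0.

Definition pairs : {set {set V}} := [set e : {set V} | #|e| == 2%N].

Definition graph_weight (G : {set {set V}}) : R :=
  \prod_(e in pairs) (if e \in G then pair_prob e else 1 - pair_prob e).

Definition adj (G : {set {set V}}) (x y : V) : bool := (x != y) && ([set x; y] \in G).

Definition common_nbhd (G : {set {set V}}) (B : {set V}) : {set V} :=
  [set v | [forall b in B, adj G b v]].

Definition Prob (Ev : pred {set {set V}}) : R :=
  \sum_(G : {set {set V}} | (G \subset pairs) && Ev G) graph_weight G.

End RandomBlockModel.

(* Main.v *)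
Require Import Defs.
From mathcomp Require Import all_boot all_order all_algebra.
From mathcomp Require Import reals exp.
From mathcomp Require Import sequences.
From mathcomp Require Import ring lra.
Import Order.TTheory GRing.Theory Num.Theory.
Local Open Scope ring_scope.

Lemma sum_sub_prod (R : realType) (T : finType) (P F : {set T}) (f : T -> R) :
  F \subset P ->
  \sum_(J : {set T} | (J \subset P) && (F \subset J))
     \prod_(e in P) (if e \in J then f e else 1 - f e) = \prod_(e in F) f e.
Proof.
move=> FP.
have := @bigA_distr R 0 1 ( *%R) (+%R) T
  (fun e => if e \in P then f e else 0)
  (fun e => if e \in P then (if e \in F then 0 else 1 - f e) else 1).
have -> : \prod_i ((if i \in P then f i else 0) +
                   (if i \in P then if i \in F then 0 else 1 - f i else 1))
          = \prod_(i in F) f i.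
  rewrite [RHS]big_mkcond; apply: eq_bigr => i _.
  case: (boolP (i \in F)) => iF.
    by rewrite (subsetP FP _ iF) addr0.
  by case: (i \in P); rewrite ?add0r // addrC subrK.
move=> ->; rewrite [LHS]big_mkcond /=; apply: eq_big => // J _.
case: ifP => [/andP[JP FJ]|].
  rewrite [LHS]big_mkcond; apply: eq_bigr => i _.
  case: (boolP (i \in P)) => iP.
    case: (boolP (i \in J)) => // iJ.
    by case: (boolP (i \in F)) => // iF; rewrite (subsetP FJ _ iF) in iJ.
  by case: (boolP (i \in J)) => // iJ; rewrite (subsetP JP _ iJ) in iP.
move/negbT; rewrite negb_and => /orP[/subsetPn[i iJ iP]|/subsetPn[i iF iJ]].
  by rewrite (bigD1 i) //= iJ (negbTE iP) mul0r.
by rewrite (bigD1 i) //= (negbTE iJ) (subsetP FP _ iF) iF mul0r.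
Qed.

Lemma pblkC (R : realType) D n i k : pblk R D n i k = pblk R D n k i.
Proof. by rewrite /pblk addrAC. Qed.

Lemma pair_prob_star (R : realType) D n (V : finType) (blk : V -> nat) (b u : V) :
  b != u -> pair_prob R D n blk [set b; u] = pblk R D n (blk b) (blk u).
Proof.
move=> bu; rewrite /pair_prob; case: pickP => [[x y] /= /andP[xy /eqP E]|H].
  have xin : x \in [set b; u] by rewrite E !inE eqxx.
  have yin : y \in [set b; u] by rewrite E !inE eqxx orbT.
  have bin : b \in [set x; y] by rewrite -E !inE eqxx.
  move: xin yin bin; rewrite !inE.
  case/orP=> /eqP ex; case/orP=> /eqP ey; subst x y => _.
  - by move: xy; rewrite eqxx.
  - by [].
  - by rewrite pblkC.
  - by move: xy; rewrite eqxx.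
by move: (H (b, u)); rewrite /= bu eqxx.
Qed.

Lemma prob_star (R : realType) D n (V : finType) (blk : V -> nat) (u : V) (A : {set V}) :
  u \notin A ->
  Prob R D n blk (fun G => [set [set b; u] | b in A] \subset G)
  = \prod_(b in A) pblk R D n (blk b) (blk u).
Proof.
move=> uA; rewrite /Prob /graph_weight.
have neq : forall b, b \in A -> b != u.
  by move=> b bA; apply: contraNneq uA => <-.
rewrite sum_sub_prod.
  rewrite big_imset /=.
    by apply: eq_bigr => b bA; rewrite pair_prob_star // neq.
  move=> b c bA cA /setP E; move: (E b); rewrite !inE eqxx /=.
  by rewrite eq_sym (negbTE (neq b bA)) orbF => /esym/eqP.
apply/subsetP => e /imsetP[b bA ->]; rewrite /pairs inE cards2 neq //.
Qed.

Lemma second_moment (R : realType) (T : finType) (pi : T -> R) (S E : pred T)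
  (Y : T -> R) (c : R) :
  (forall G, S G -> 0 <= pi G) -> 0 < c ->
  (forall G, ~~ E G -> Y G = 0) ->
  (2 * c * (\sum_(G | S G) pi G * Y G) - \sum_(G | S G) pi G * Y G ^+ 2) / c ^+ 2
  <= \sum_(G | S G && E G) pi G.
Proof.
move=> pi0 c0 YE.
have -> : (2 * c * (\sum_(G | S G) pi G * Y G) - \sum_(G | S G) pi G * Y G ^+ 2) / c ^+ 2
  = \sum_(G | S G) pi G * ((2 * c * Y G - Y G ^+ 2) / c ^+ 2).
  rewrite mulr_sumr -sumrB mulr_suml; apply: eq_bigr => G _; ring.
rewrite [leRHS]big_mkcondr /=.
apply: ler_sum => G SG.
case: (boolP (E G)) => EG; last by rewrite YE // !expr0n /= !mulr0 subrr mul0r mulr0.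
rewrite -[X in _ <= X]mulr1; apply: ler_wpM2l; first exact: pi0.
rewrite ler_pdivrMr ?exprn_gt0 // mul1r.
have : 0 <= (c - Y G) ^+ 2 by apply: sqr_ge0.
lra.
Qed.

Set Implicit Arguments. Unset Strict Implicit. Unset Printing Implicit Defensive.

Definition Qp (R : realType) (V : finType) (q : V -> R) (A : {set V}) : R :=
  \prod_(b in A) q b.

Lemma Qp_gt0 (R : realType) (V : finType) (q : V -> R) A :
  (forall b, 0 < q b) -> 0 < Qp q A.
Proof. by move=> h; apply: prodr_gt0 => b _. Qed.

Lemma QpU (R : realType) (V : finType) (q : V -> R) A B :
  Qp q (A :|: B) * Qp q (A :&: B) = Qp q A * Qp q B.
Proof.
rewrite /Qp [\prod_(b in A :|: B) _](big_setID A) [\prod_(b in B) _](big_setID A) /=.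
rewrite setUK setDUl setDv set0U [B :&: A]setIC.
ring.
Qed.

Lemma Qp_pair (R : realType) (V : finType) (q : V -> R) A B :
  (forall b, 0 < q b) ->
  (Qp q A)^-1 * (Qp q B)^-1 * Qp q (A :|: B) = (Qp q (A :&: B))^-1.
Proof.
move=> q0.
have hA := Qp_gt0 A q0; have hB := Qp_gt0 B q0; have hI := Qp_gt0 (A :&: B) q0.
have E := QpU q A B.
have -> : Qp q (A :|: B) = Qp q A * Qp q B / Qp q (A :&: B).
  by rewrite -E mulrK // unitfE gt_eqF.
field; rewrite !gt_eqF //.
Qed.

Lemma Qp_restrict (R : realType) (V : finType) (q : V -> R) A :
  (forall b, q b <= 1) ->
  Qp q A = Qp q (A :&: [set b | q b < 1]).
Proof.
move=> q1; rewrite /Qp (big_setID [set b | q b < 1]) /=.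
rewrite [X in _ * X]big1 ?mulr1 // => b; rewrite !inE => /andP[/negbTE h _].
by apply/eqP; rewrite eq_le q1 /= leNgt h.
Qed.

Lemma inv_le_sum (R : realType) (V : finType) (q : V -> R) (W S0 Bj : {set V}) :
  (forall b, 0 < q b) -> S0 \subset W -> S0 \subset Bj ->
  (Qp q S0)^-1 <= 1 + \sum_(S in powerset W | S != set0)
                         ((S \subset Bj)%:R * (Qp q S)^-1).
Proof.
move=> q0 SW SB.
have pos : forall S : {set V}, 0 <= (S \subset Bj)%:R * (Qp q S)^-1.
  by move=> S; rewrite mulr_ge0 ?ler0n ?invr_ge0 ?ltW ?(Qp_gt0 S q0).
case: (eqVneq S0 set0) => [->|ne].
  rewrite /Qp big_set0 invr1 lerDl; exact: sumr_ge0.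
rewrite (bigD1 S0) /=; last by rewrite powersetE SW ne.
rewrite SB mul1r addrCA lerDl addr_ge0 //; exact: sumr_ge0.
Qed.

Lemma sum_ind_card (R : realType) (I : finType) (P : pred I) :
  \sum_(j : I) (P j)%:R = #|[set j | P j]|%:R :> R.
Proof.
rewrite -sumr_const; rewrite [RHS]big_mkcond /=; apply: eq_bigr => j _.
by rewrite inE; case: (P j).
Qed.

Lemma S_bound (R : realType) (V : finType) (q g : V -> R) (beta : R)
  (blk : V -> nat) (Dn t : nat) (B : 'I_t -> {set V}) (S : {set V}) :
  0 < beta -> (forall b, 0 < q b) ->
  (forall b, q b < 1 -> q b = beta * g b) ->
  (forall b, 0 < g b) ->
  (forall b c, (blk b <= blk c)%N -> g c <= g b) ->
  (forall b, #|[set j | b \in B j]|%:R <= g b ^+ Dn) ->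
  S != set0 -> S \subset [set b | q b < 1] -> (#|S| <= Dn)%N ->
  (\sum_j (S \subset B j)%:R) * (Qp q S)^-1 <= (beta ^+ Dn)^-1.
Proof.
move=> b0 q0 hqg g0 hmon hdeg /set0Pn[s0 s0S] SV SD.
case: (arg_maxnP blk s0S) => s sS smax.
have qs1 : q s < 1 by move: (subsetP SV s sS); rewrite inE.
set x := beta * g s.
have x0 : 0 < x by rewrite mulr_gt0.
have x1 : x < 1 by rewrite /x -hqg.
have h1 : \sum_j (S \subset B j)%:R <= #|[set j | s \in B j]|%:R :> R.
  rewrite -sum_ind_card; apply: ler_sum => j _.
  case: (boolP (S \subset B j)) => // /subsetP h.
  by rewrite (h s sS).
have h2 : x ^+ Dn <= Qp q S.
  apply: (@le_trans _ _ (x ^+ #|S|)).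
    by apply: ler_wiXn2l; rewrite ?ltW.
  rewrite /Qp -prodr_const; apply: ler_prod => b bS.
  rewrite ltW //=.
  have qb1 : q b < 1 by move: (subsetP SV b bS); rewrite inE.
  rewrite hqg // /x ler_pM2l //; apply: hmon; exact: smax.
have h3 : (Qp q S)^-1 <= (x ^+ Dn)^-1.
  by rewrite lef_pV2 ?posrE ?exprn_gt0 ?Qp_gt0.
apply: (@le_trans _ _ (g s ^+ Dn * (x ^+ Dn)^-1)).
  apply: ler_pM.
  - by apply: sumr_ge0 => j _; rewrite ler0n.
  - by rewrite invr_ge0 ltW ?Qp_gt0.
  - exact: le_trans h1 (hdeg s).
  - exact: h3.
rewrite /x exprMn invfM mulrCA mulfV ?mulr1 //.
by rewrite expf_neq0 // gt_eqF.
Qed.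

Lemma pair_sum_bound (R : realType) (V : finType) (q g : V -> R) (beta : R)
  (blk : V -> nat) (Dn t : nat) (B : 'I_t -> {set V}) :
  0 < beta -> (forall b, 0 < q b) -> (forall b, q b <= 1) ->
  (forall b, q b < 1 -> q b = beta * g b) ->
  (forall b, 0 < g b) ->
  (forall b c, (blk b <= blk c)%N -> g c <= g b) ->
  (forall b, #|[set j | b \in B j]|%:R <= g b ^+ Dn) ->
  (forall i, (#|B i| <= Dn)%N) ->
  \sum_i \sum_j (Qp q (B i))^-1 * (Qp q (B j))^-1 * Qp q (B i :|: B j)
  <= t%:R * (t%:R + 2 ^+ Dn * (beta ^+ Dn)^-1).
Proof.
move=> b0 q0 q1 hqg g0 hmon hdeg hcard.
have -> : t%:R * (t%:R + 2 ^+ Dn * (beta ^+ Dn)^-1)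
   = \sum_(i : 'I_t) (t%:R + 2 ^+ Dn * (beta ^+ Dn)^-1) :> R.
  by rewrite sumr_const card_ord mulr_natl.
apply: ler_sum => i _.
set V' := [set b | q b < 1].
set W := B i :&: V'.
have WD : (#|W| <= Dn)%N.
  by apply: leq_trans (hcard i); apply: subset_leq_card; apply: subsetIl.
apply: (@le_trans _ _ (\sum_j (1 + \sum_(S in powerset W | S != set0)
                         ((S \subset B j)%:R * (Qp q S)^-1)))).
  apply: ler_sum => j _.
  rewrite Qp_pair // (Qp_restrict _ q1).
  apply: inv_le_sum => //.
    by rewrite /W setIAC; apply: subsetIl.
  by rewrite -setIA setIC -setIA; apply: subsetIl.
rewrite big_split /= sumr_const card_ord lerD2l.
rewrite exchange_big /=.
apply: (@le_trans _ _ (\sum_(S in powerset W | S != set0) (beta ^+ Dn)^-1)).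
  apply: ler_sum => S /andP[SW Sne].
  rewrite -mulr_suml.
  move: SW; rewrite powersetE => SW.
  apply: (S_bound (g := g) (blk := blk)) => //.
    exact: subset_trans SW (subsetIr _ _).
  exact: leq_trans (subset_leq_card SW) WD.
rewrite big_mkcondr /=.
apply: (@le_trans _ _ (\sum_(S in powerset W) (beta ^+ Dn)^-1)).
  apply: ler_sum => S _; case: ifP => // _.
  by rewrite invr_ge0 exprn_ge0 // ltW.
rewrite sumr_const card_powerset.
rewrite -[(beta ^+ Dn)^-1 *+ _]mulr_natl natrX.
apply: ler_wpM2r; first by rewrite invr_ge0 exprn_ge0 // ltW.
rewrite -!natrX ler_nat leq_exp2l //.
Qed.

Lemma graph_weight_ge0 (R : realType) D n (V : finType) (blk : V -> nat) G :
  (forall i j, 0 <= pblk R D n i j <= 1) -> 0 <= graph_weight R D n blk G.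
Proof.
move=> h; apply: prodr_ge0 => e _.
have /andP[p0 p1] : 0 <= pair_prob R D n blk e <= 1.
  rewrite /pair_prob; case: pickP => [xy _|_]; first exact: h.
  by rewrite lexx ler01.
by case: ifP => _; rewrite ?subr_ge0.
Qed.

Lemma main_prob (R : realType) D n (V : finType) (blk : V -> nat) (u : V)
  (t : nat) (B : 'I_t -> {set V}) (c : R) :
  (forall i j, 0 <= pblk R D n i j <= 1) ->
  (forall b, 0 < pblk R D n (blk b) (blk u)) ->
  (forall i, u \notin B i) -> 0 < c ->
  \sum_i \sum_j (Qp (fun b => pblk R D n (blk b) (blk u)) (B i))^-1
      * (Qp (fun b => pblk R D n (blk b) (blk u)) (B j))^-1
      * Qp (fun b => pblk R D n (blk b) (blk u)) (B i :|: B j) <= t%:R * c ->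
  t%:R / c <= Prob R D n blk (fun G => [exists i, u \in common_nbhd G (B i)]).
Proof.
move=> h01 hpos huB c0 hM.
set q := fun b => pblk R D n (blk b) (blk u).
pose star := fun A : {set V} => [set [set b; u] | b in A].
pose X := fun (i : 'I_t) (G : {set {set V}}) => star (B i) \subset G.
pose w := fun i => (Qp q (B i))^-1.
pose Y := fun G : {set {set V}} => \sum_i w i * (X i G)%:R.
have XE : forall i G, X i G -> [exists i, u \in common_nbhd G (B i)].
  move=> i G XiG; apply/existsP; exists i; rewrite inE; apply/forallP => b.
  apply/implyP => bB; rewrite /adj; apply/andP; split.
    by apply: contraNneq (huB i) => <-.
  by apply: (subsetP XiG); apply/imsetP; exists b.
have probX : forall A : {set V}, u \notin A ->
    \sum_(G : {set {set V}} | G \subset pairs V) graph_weight R D n blk G * (star A \subset G)%:R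
    = Qp q A.
  move=> A uA; rewrite /Qp /q -(@prob_star R D n V blk u A uA) /Prob big_mkcondr /=.
  by apply: eq_bigr => G _; case: ifP; rewrite ?mulr1 ?mulr0.
have m1 : \sum_(G : {set {set V}} | G \subset pairs V) graph_weight R D n blk G * Y G = t%:R.
  rewrite /Y; under eq_bigr => G _ do rewrite big_distrr /=.
  rewrite exchange_big /=.
  have -> : t%:R = \sum_(i : 'I_t) (1:R) by rewrite sumr_const card_ord.
  apply: eq_bigr => i _.
  under eq_bigr => G _ do rewrite mulrCA.
  rewrite -big_distrr /= probX // /w mulVf // gt_eqF // Qp_gt0 //.
have pw : forall G, graph_weight R D n blk G * Y G ^+ 2 =
    \sum_i \sum_j (w i * w j) * (graph_weight R D n blk G *
                               (star (B i :|: B j) \subset G)%:R).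
  move=> G; rewrite /Y expr2 big_distrl /= big_distrr /=; apply: eq_bigr => i _.
  rewrite big_distrr /= big_distrr /=; apply: eq_bigr => j _.
  rewrite /star imsetU subUset -/(X i G) -/(X j G).
  move: (X i G) (X j G) => [] [] /=.
  all: rewrite ?mulr1n ?mulr0n ?mulr1 ?mulr0 ?mul0r ?mulr0 //.
  by rewrite mulrC.
have m2 : \sum_(G : {set {set V}} | G \subset pairs V) graph_weight R D n blk G * Y G ^+ 2
   = \sum_i \sum_j (Qp q (B i))^-1 * (Qp q (B j))^-1 * Qp q (B i :|: B j).
  under eq_bigr => G _ do rewrite pw.
  rewrite exchange_big /=; apply: eq_bigr => i _.
  rewrite exchange_big /=; apply: eq_bigr => j _.
  rewrite -big_distrr /= probX //; last by rewrite inE negb_or !huB.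
have YE : forall G, ~~ [exists i, u \in common_nbhd G (B i)] -> Y G = 0.
  move=> G nE; rewrite /Y big1 // => i _.
  case: (boolP (X i G)) => XiG; last by rewrite mulr0.
  by rewrite (XE i G XiG) in nE.
have H := @second_moment R _ (graph_weight R D n blk) (fun G => G \subset pairs V)
  (fun G => [exists i, u \in common_nbhd G (B i)]) Y c
  (fun G _ => graph_weight_ge0 blk G h01) c0 YE.
rewrite m1 m2 in H.
apply: le_trans H.
set M := \sum_i _.
have hM' : M <= t%:R * c by exact: hM.
rewrite -subr_ge0.
have -> : (2 * c * t%:R - M) / c ^+ 2 - t%:R / c = (t%:R * c - M) / c ^+ 2.
  by field; rewrite gt_eqF.
by apply: divr_ge0; [rewrite subr_ge0 | rewrite exprn_ge0 // ltW].
Qed.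


Lemma ln2_ge (R : realType) : 1 / 2 <= ln (2 : R).
Proof.
have h : expR (1 / 2 : R) <= 2.
  have := expR_ge1Dx (- (1 / 2) : R).
  rewrite expRN => h.
  have e0 := expR_gt0 (1 / 2 : R).
  rewrite -(@ler_pM2r _ (expR (1/2))) // mulVf ?gt_eqF // in h.
  lra.
rewrite -[X in X <= _](expRK (1/2)).
by rewrite ler_ln ?posrE ?expR_gt0.
Qed.

Lemma ln_ge_pow2 (R : realType) (m n : nat) :
  (2 ^ m <= n)%N -> (m%:R / 2 : R) <= ln (n%:R : R).
Proof.
move=> h.
have n0 : (0 < n)%N by apply: leq_trans h; rewrite expn_gt0.
apply: (@le_trans _ _ (ln ((2 : R) ^+ m))).
  rewrite lnXn // -[ln 2 *+ m]mulr_natr.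
  apply: (@le_trans _ _ (1/2 * m%:R)); first by lra.
  apply: ler_wpM2r; [by rewrite ler0n | exact: ln2_ge].
rewrite ler_ln ?posrE ?exprn_gt0 ?ltr0n //.
by rewrite -natrX ler_nat.
Qed.

Lemma final_ineq (R : realType) (R0 y z : R) :
  0 <= R0 -> 2 <= z -> z ^+ 2 <= y ->
  Num.min (1 / 4) R0 <= R0 * y / (R0 * y + z).
Proof.
move=> R00 z2 zy.
have zz : 2 * z <= z ^+ 2 by rewrite expr2 ler_wpM2r //; lra.
have y0 : 0 <= y by lra.
have den : 0 < R0 * y + z by have := mulr_ge0 R00 y0; lra.
rewrite ler_pdivlMr //.
case: (lerP (1/4) R0) => h.

  have : 1/4 * y <= R0 * y by rewrite ler_wpM2r.
  lra.

have h1 : R0 * y <= 1/4 * y by rewrite ler_wpM2r // ltW.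
have : R0 * (R0 * y + z - y) <= 0 by apply: mulr_ge0_le0 => //; lra.
rewrite mulrBr mulrDr; lra.
Qed.

Lemma lnln_ge2 (R : realType) (n : nat) :
  (2 ^ 32 <= n)%N -> 16 <= ln (n%:R : R) /\ 2 <= ln (ln (n%:R : R)).
Proof.
move=> h.
have h1 : 16 <= ln (n%:R : R).
  have := ln_ge_pow2 R h; clear h => h.
  lra.
clear h; split=> //.
have := ln2_ge R => l2.
have e16 : (2 : R) ^+ 4 = 16 by rewrite -natrX.
apply: (@le_trans _ _ (ln ((2 : R) ^+ 4))).
  rewrite lnXn // -[ln 2 *+ 4]mulr_natr; lra.
rewrite ler_ln ?posrE ?exprn_gt0 //.
all: rewrite ?e16; lra.
Qed.

Lemma DpowS (R : realType) (D : nat) (x : R) : (0 < D)%N ->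
  Dpow D (1 - x) = D%:R * Dpow D (- x).
Proof.
move=> D0; rewrite /Dpow powRD; last by rewrite pnatr_eq0 -lt0n D0 implybT.
by rewrite powRr1 // ler0n.
Qed.

Lemma powR_nat_pow (R : realType) (a x : R) (D : nat) : 0 <= a ->
  a `^ (D%:R * x) = (a `^ x) ^+ D.
Proof.
move=> a0; rewrite -powR_mulrn ?powR_ge0 // -powRrM mulrC //.
Qed.


Unset Implicit Arguments. Set Strict Implicit.

Theorem lemma2p7 (R : realType) (D : nat) (HD : (2 <= D)%N) :
  exists n0 : nat, forall n : nat, (n0 <= n)%N ->
  forall (N : nat), is_N R D n N ->
  forall (V : finType) (blk : V -> nat) (L : nat) (sub : V -> nat),
    (* vertex set W = W_1 u ... u W_N with |W_k| = 100 3^D n^{1-D^{-k}} up to rounding *)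
    (forall v, (1 <= blk v <= N)%N) ->
    (forall k, (1 <= k <= N)%N ->
       `| #|Wblk blk k|%:R - blk_size R D n k | < 1) ->
    (* sub-blocks W_{k,1},...,W_{k,L}, L = log n up to rounding *)
    `| L%:R - ln (nR R n) | < 1 ->
    (forall v, (1 <= sub v <= L)%N) ->
    (forall k, (1 <= k <= N)%N ->
       `| #|[set v in Wblk blk k | sub v == 1%N]|%:R - #|Wblk blk k|%:R / 2 | < (1 : R)) ->
    (forall k j, (1 <= k <= N)%N -> (2 <= j <= L)%N ->
       #|Wblk blk k|%:R / (2 * ln (nR R n))
         <= #|[set v in Wblk blk k | sub v == j]|%:R) ->
  forall (t : nat) (B : 'I_t -> {set V}),
    (1 <= t <= n)%N ->
    (* well-behaved *)
    (forall i, (#|B i| <= D)%N) ->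
    (forall k v, (1 <= k <= N)%N -> v \in Wblk blk k ->
       #|[set i | v \in B i]|%:R <= Delta R D n k) ->
    (forall k j, (1 <= k <= N)%N -> (1 <= j <= L)%N ->
       (#|(\bigcup_i B i) :&: [set v in Wblk blk k | sub v == j]|%:R : R)
         <= #|[set v in Wblk blk k | sub v == j]|%:R / 2) ->
  forall (k : nat) (u : V),
    (1 <= k <= N)%N -> u \in Wblk blk k -> u \notin \bigcup_i B i ->
    Num.min (1 / 4)
      (t%:R * (nR R n) `^ (Dpow D (1 - k%:R) - 1)
         * (ln (nR R n)) ^+ 2 * (ln (ln (nR R n))) ^+ D)
    <= Prob R D n blk
         (fun G => [exists i, u \in common_nbhd G (B i)]).
Proof.
have D0 : (0 < D)%N by apply: leq_trans HD.
exists (2 ^ 32)%N => n hn N isN V blk L sub hblk hsize hL hsub hs1 hsj t B ht NB1 NB2 NB3 k u hk uW unB.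
clear isN hsize hL hsub hs1 hsj NB3.
have [l16 l22] := lnln_ge2 R hn.
have n1 : (1 <= n)%N by apply: leq_trans hn; rewrite expn_gt0.
clear hn.
set nr := nR R n.
have nr1 : 1 <= nr by rewrite /nr /nR ler1n.
have nr0 : 0 < nr by apply: lt_le_trans nr1.
set l := ln nr.
set l2 := ln l.
have l16' : 16 <= l := l16.
have l22' : 2 <= l2 := l22.
clear l16 l22.
have l0 : 0 < l by lra.
have l20 : 0 < l2 by lra.
have Dr1 : 1 <= (D%:R : R) by rewrite ler1n.
have Dr0 : (D%:R : R) != 0 by rewrite pnatr_eq0 -lt0n.
have uk : blk u = k by move: uW; rewrite inE => /eqP.
pose beta := nr `^ (- (D%:R)^-1 + Dpow D (- k%:R)) * l `^ (2 / D%:R) * l2 ^+ 3.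
pose g := fun b => nr `^ Dpow D (- (blk b)%:R).
pose q := fun b => pblk R D n (blk b) (blk u).
have beta0 : 0 < beta by rewrite /beta !mulr_gt0 ?powR_gt0 ?exprn_gt0.
have g0 : forall b, 0 < g b by move=> b; rewrite /g powR_gt0.
have hq_eq : forall b, q b = Num.min (beta * g b) 1.
  move=> b; rewrite /q /pblk uk; congr (Num.min _ 1).
  rewrite -/nr -/l -/l2 addrAC powRD; last by rewrite (gt_eqF nr0) implybT.
  by rewrite /beta /g; ring.
have h01 : forall i j, 0 <= pblk R D n i j <= 1.
  move=> i j; rewrite /pblk le_min ge_min lexx orbT ler01 andbT /=.
  by rewrite !mulr_ge0 ?powR_ge0 ?exprn_ge0 // -/nr -/l -/l2 ltW.
have q0 : forall b, 0 < q b.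
  by move=> b; rewrite hq_eq lt_min ltr01 andbT mulr_gt0.
have q1 : forall b, q b <= 1 by move=> b; have /andP[] := h01 (blk b) (blk u).
have hqg : forall b, q b < 1 -> q b = beta * g b.
  move=> b; rewrite hq_eq; case: (lerP (beta * g b) 1) => //.
  by rewrite ltxx.
have hmon : forall b c, (blk b <= blk c)%N -> g c <= g b.
  move=> b c bc; rewrite /g; apply: ler_powR => //.
  by apply: ler_powR => //; rewrite lerN2 ler_nat.
have hdeg : forall b, #|[set j | b \in B j]|%:R <= g b ^+ D.
  move=> b; have := NB2 (blk b) b (hblk b); rewrite inE eqxx => /(_ isT) h.
  apply: le_trans h _.
  by rewrite /Delta /g DpowS // powR_nat_pow // ltW.
have huB : forall i, u \notin B i.
  by move=> i; apply: contra unB => uBi; apply/bigcupP; exists i.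
set c := t%:R + 2 ^+ D * (beta ^+ D)^-1.
have t0 : 0 < (t%:R : R) by rewrite ltr0n; case/andP: ht.
have c0 : 0 < c by rewrite /c addr_gt0 // mulr_gt0 ?exprn_gt0 ?invr_gt0 ?exprn_gt0.
have Hsum := @pair_sum_bound R V q g beta blk D t B beta0 q0 q1 hqg g0 hmon hdeg NB1.
have Hp := @main_prob R D n V blk u t B c h01 q0 huB c0 Hsum.
apply: le_trans Hp.
set R0 := t%:R * nr `^ (Dpow D (1 - k%:R) - 1) * l ^+ 2 * l2 ^+ D.
have bD : beta ^+ D = nr `^ (Dpow D (1 - k%:R) - 1) * l ^+ 2 * l2 ^+ (3 * D).
  rewrite /beta !exprMn -!powR_nat_pow ?ltW //.
  have -> : D%:R * (2 / D%:R) = (2%:R : R) by field.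
  rewrite powR_mulrn ?ltW // DpowS //.
  have -> : (D%:R : R) * (- D%:R^-1 + Dpow D (- k%:R)) = D%:R * Dpow D (- k%:R) - 1 by field.
  rewrite (_ : (3 * D = D + (D + D))%N); last by rewrite !mulSn mul0n addn0.
  rewrite !exprD; ring.
have tb : t%:R * beta ^+ D = R0 * l2 ^+ (2 * D).
  rewrite bD /R0 (_ : (3 * D = D + 2 * D)%N); last by rewrite mulSn.
  rewrite exprD; ring.
have bD0 : beta ^+ D != 0 by rewrite expf_neq0 // gt_eqF.
have -> : t%:R / c = R0 * l2 ^+ (2 * D) / (R0 * l2 ^+ (2 * D) + 2 ^+ D).
  rewrite -tb /c; field.
  apply/andP; split => //.
  rewrite gt_eqF // addr_gt0 ?exprn_gt0 // mulr_gt0 // exprn_gt0 //.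
apply: final_ineq.
- by rewrite /R0 !mulr_ge0 ?ler0n ?powR_ge0 ?exprn_ge0 // ltW.
- by rewrite -natrX ler_nat -{1}(expn1 2) leq_exp2l.
- rewrite mulnC exprM.
  have h2 : (2:R) ^+ D <= l2 ^+ D.
    by apply: (lerXn2r D); rewrite ?nnegrE //; lra.
  by apply: (lerXn2r 2); rewrite ?nnegrE ?exprn_ge0 //; lra.
Qed.
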